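(* Let $K$ be a Polish group admitting a compatible bi-invariant metric and let $\Gamma \leq K$ be a discrete subgroup. Let $(Z, d_Z)$ be a bounded Polish metric space on which $\Gamma$ acts faithfully by isometries. Then there exist a bounded Polish metric space $(Y, d_Y)$, a continuous, faithful, isometric action of $K$ on $Y$, and an isometric embedding $e \colon Z \to Y$ which is $\Gamma$-equivariant (i.e., $e(\gamma\cdot z)=\gamma\cdot e(z)$ for all $\gamma\in\Gamma$, $z\in Z$). *)

(* Defs.v *)
From Stdlib Require Import Reals.
Open Scope R_scope.

Definition is_metric {X : Type} (d : X -> X -> R) : Prop :=
  (forall x y, 0 <= d x y) /\
  (forall x y, d x y = 0 <-> x = y) /\
  (forall x y, d x y = d y x) /\
  (forall x y z, d x z <= d x y + d y z).

Definition metric_bounded {X : Type} (d : X -> X -> R) : Prop :=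
  exists M : R, forall x y, d x y <= M.

(** separable: there is a countable dense subset (allowing X empty) *)
Definition metric_separable {X : Type} (d : X -> X -> R) : Prop :=
  exists s : nat -> option X,
    forall (x : X) (eps : R), 0 < eps ->
      exists n y, s n = Some y /\ d x y < eps.

Definition cauchy_seq {X : Type} (d : X -> X -> R) (u : nat -> X) : Prop :=
  forall eps, 0 < eps -> exists N, forall m n, (N <= m)%nat -> (N <= n)%nat ->
    d (u m) (u n) < eps.

Definition seq_converges_to {X : Type} (d : X -> X -> R) (u : nat -> X) (l : X) : Prop :=
  forall eps, 0 < eps -> exists N, forall n, (N <= n)%nat -> d (u n) l < eps.

Definition metric_complete {X : Type} (d : X -> X -> R) : Prop :=
  forall u, cauchy_seq d u -> exists l, seq_converges_to d u l.

Definition polish_metric_space {X : Type} (d : X -> X -> R) : Prop :=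
  is_metric d /\ metric_separable d /\ metric_complete d.

Definition metric_open {X : Type} (d : X -> X -> R) (U : X -> Prop) : Prop :=
  forall x, U x -> exists eps, 0 < eps /\ forall y, d x y < eps -> U y.

Definition same_topology {X : Type} (d1 d2 : X -> X -> R) : Prop :=
  forall U : X -> Prop, metric_open d1 U <-> metric_open d2 U.

Definition polish_topology {X : Type} (d : X -> X -> R) : Prop :=
  metric_separable d /\
  exists d' : X -> X -> R, is_metric d' /\ metric_complete d' /\ same_topology d d'.

Record group_str (K : Type) := GroupStr {
  gmul : K -> K -> K;
  ginv : K -> K;
  gone : K;
  gmulA : forall x y z, gmul x (gmul y z) = gmul (gmul x y) z;
  gmul1l : forall x, gmul gone x = x;
  gmul1r : forall x, gmul x gone = x;
  gmulVl : forall x, gmul (ginv x) x = gone;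
  gmulVr : forall x, gmul x (ginv x) = gone
}.
Arguments gmul {K} g _ _.
Arguments ginv {K} g _.
Arguments gone {K} g.

Definition bi_invariant {K : Type} (G : group_str K) (d : K -> K -> R) : Prop :=
  forall g x y, d (gmul G g x) (gmul G g y) = d x y /\ d (gmul G x g) (gmul G y g) = d x y.

Definition topological_group_metric {K : Type} (G : group_str K) (d : K -> K -> R) : Prop :=
  (forall x y eps, 0 < eps -> exists delta, 0 < delta /\
     forall x' y', d x x' < delta -> d y y' < delta ->
       d (gmul G x y) (gmul G x' y') < eps) /\
  (forall x eps, 0 < eps -> exists delta, 0 < delta /\
     forall x', d x x' < delta -> d (ginv G x) (ginv G x') < eps).

Definition polish_group_biinv_metric {K : Type} (G : group_str K) (d : K -> K -> R) : Prop :=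
  is_metric d /\ topological_group_metric G d /\ polish_topology d /\ bi_invariant G d.

Definition is_subgroup {K : Type} (G : group_str K) (H : K -> Prop) : Prop :=
  H (gone G) /\ (forall x y, H x -> H y -> H (gmul G x y)) /\
  (forall x, H x -> H (ginv G x)).

Definition discrete_subset {K : Type} (d : K -> K -> R) (H : K -> Prop) : Prop :=
  forall g, H g -> exists eps, 0 < eps /\ forall h, H h -> d g h < eps -> h = g.

(** * Actions.  An action of the subgroup H on X is given by a map K -> X -> X
    of which only the values on elements of H matter. *)

Definition is_action_on {K X : Type} (G : group_str K) (H : K -> Prop)
  (act : K -> X -> X) : Prop :=
  (forall x, act (gone G) x = x) /\
  (forall g h x, H g -> H h -> act (gmul G g h) x = act g (act h x)).

Definition action_faithful_on {K X : Type} (G : group_str K) (H : K -> Prop)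
  (act : K -> X -> X) : Prop :=
  forall g, H g -> (forall x, act g x = x) -> g = gone G.

Definition action_isometric_on {K X : Type} (H : K -> Prop) (d : X -> X -> R)
  (act : K -> X -> X) : Prop :=
  forall g x y, H g -> d (act g x) (act g y) = d x y.

Definition action_continuous {K X : Type} (dK : K -> K -> R) (dX : X -> X -> R)
  (act : K -> X -> X) : Prop :=
  forall g x eps, 0 < eps -> exists delta, 0 < delta /\
    forall g' x', dK g g' < delta -> dX x x' < delta ->
      dX (act g x) (act g' x') < eps.

Definition whole {K : Type} : K -> Prop := fun _ => True.

(* Main.v *)
Require Import Defs.
From Stdlib Require Import Reals Lra Lia Cantor.
From Stdlib Require Import ClassicalEpsilon ProofIrrelevance FunctionalExtensionality PropExtensionality Classical.
Open Scope R_scope.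

Definition rlim (a : nat -> R) : R :=
  match excluded_middle_informative (exists l, Un_cv a l) with
  | left H => proj1_sig (constructive_indefinite_description _ H)
  | right _ => 0 end.

Lemma rlim_spec a l : Un_cv a l -> rlim a = l.
Proof.
  intro H. unfold rlim. destruct excluded_middle_informative as [H1|H1].
  - destruct constructive_indefinite_description as [l' Hl']; simpl.
    eapply UL_sequence; eauto.
  - exfalso; apply H1; eauto.
Qed.

Lemma cv_le_ev a b l m : Un_cv a l -> Un_cv b m ->
  (exists N, forall n, (N <= n)%nat -> a n <= b n) -> l <= m.
Proof.
  intros Ha Hb [N HN].
  destruct (Rle_or_lt l m) as [|Hlt]; auto. exfalso.
  destruct (Ha ((l-m)/2)) as [N1 H1]; [lra|].
  destruct (Hb ((l-m)/2)) as [N2 H2]; [lra|].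
  set (n := (N + N1 + N2)%nat).
  specialize (H1 n ltac:(unfold n; lia)). specialize (H2 n ltac:(unfold n; lia)).
  specialize (HN n ltac:(unfold n; lia)).
  unfold Rdist in *. apply Rabs_def2 in H1. apply Rabs_def2 in H2. lra.
Qed.

Lemma cv_const c : Un_cv (fun _ => c) c.
Proof. intros e He. exists 0%nat. intros. unfold Rdist. rewrite Rminus_diag, Rabs_R0. lra. Qed.

Section Completion.
Variable B : Type.
Variable p : B -> B -> R.
Hypothesis p_nn : forall x y, 0 <= p x y.
Hypothesis p_refl : forall x, p x x = 0.
Hypothesis p_sym : forall x y, p x y = p y x.
Hypothesis p_tri : forall x y z, p x z <= p x y + p y z.

Definition Cau (u : nat -> B) := cauchy_seq p u.

Lemma cau_R u v : Cau u -> Cau v -> Cauchy_crit (fun n => p (u n) (v n)).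
Proof.
  intros Hu Hv e He.
  destruct (Hu (e/2)) as [N1 H1]; [lra|]. destruct (Hv (e/2)) as [N2 H2]; [lra|].
  exists (N1 + N2)%nat. intros n m Hn Hm. unfold Rdist.
  assert (A1 := H1 n m ltac:(lia) ltac:(lia)). assert (A2 := H2 n m ltac:(lia) ltac:(lia)).
  assert (T1 := p_tri (u n) (u m) (v n)). assert (T2 := p_tri (u m) (v m) (v n)).
  assert (T3 := p_tri (u m) (u n) (v m)). assert (T4 := p_tri (u n) (v n) (v m)).
  rewrite (p_sym (u m) (u n)) in T3. rewrite (p_sym (v m) (v n)) in T2.
  apply Rabs_def1; lra.
Qed.

Definition D (u v : nat -> B) := rlim (fun n => p (u n) (v n)).

Lemma D_cv u v : Cau u -> Cau v -> Un_cv (fun n => p (u n) (v n)) (D u v).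
Proof.
  intros Hu Hv. destruct (R_complete _ (cau_R u v Hu Hv)) as [l Hl].
  unfold D. rewrite (rlim_spec _ l Hl). exact Hl.
Qed.

Lemma D_le u v c : Cau u -> Cau v -> (exists N, forall n, (N <= n)%nat -> p (u n) (v n) <= c) -> D u v <= c.
Proof. intros Hu Hv HN. eapply cv_le_ev; [apply D_cv; auto| apply cv_const | exact HN]. Qed.

Lemma D_ge u v c : Cau u -> Cau v -> (exists N, forall n, (N <= n)%nat -> c <= p (u n) (v n)) -> c <= D u v.
Proof. intros Hu Hv HN. eapply cv_le_ev; [apply cv_const | apply D_cv; auto | exact HN]. Qed.

Lemma D_nn u v : Cau u -> Cau v -> 0 <= D u v.
Proof. intros. apply D_ge; auto. exists 0%nat; auto. Qed.

Lemma D_sym u v : D u v = D v u.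
Proof. unfold D. f_equal. apply functional_extensionality. intro; auto. Qed.

Lemma D_refl u : D u u = 0.
Proof. unfold D. apply rlim_spec. apply (Un_cv_ext (fun _ => 0)); [intro; auto|apply cv_const]. Qed.

Lemma D_tri u v w : Cau u -> Cau v -> Cau w -> D u w <= D u v + D v w.
Proof.
  intros. eapply cv_le_ev; [apply D_cv; auto | apply CV_plus; apply D_cv; auto |].
  exists 0%nat; intros; auto.
Qed.

Lemma Cau_const b : Cau (fun _ => b).
Proof. intros e He. exists 0%nat. intros. rewrite p_refl. lra. Qed.

Lemma D_const a b : D (fun _ => a) (fun _ => b) = p a b.
Proof. unfold D. apply rlim_spec. apply cv_const. Qed.

Lemma D_approx u e : Cau u -> 0 < e -> exists N, forall m, (N <= m)%nat ->
   D u (fun _ => u m) <= e /\ forall n, (N <= n)%nat -> p (u n) (u m) < e.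
Proof.
  intros Hu He. destruct (Hu e He) as [N HN]. exists N. intros m Hm. split.
  - apply D_le; auto. apply Cau_const. exists N. intros n Hn. left. apply HN; auto.
  - intros; apply HN; auto.
Qed.

Definition cls (u : nat -> B) : (nat -> B) -> Prop := fun v => Cau v /\ D u v = 0.

Definition Y := {S : (nat -> B) -> Prop | exists u, Cau u /\ S = cls u}.

Definition rep (y : Y) : nat -> B :=
  proj1_sig (constructive_indefinite_description _ (proj2_sig y)).

Lemma rep_spec y : Cau (rep y) /\ proj1_sig y = cls (rep y).
Proof. unfold rep. destruct constructive_indefinite_description; simpl; auto. Qed.

Lemma rep_cau y : Cau (rep y).
Proof. apply rep_spec. Qed.

Definition mk (u : nat -> B) (H : Cau u) : Y := exist _ (cls u) (ex_intro _ u (conj H eq_refl)).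

Definition dY (y y' : Y) := D (rep y) (rep y').

Lemma cls_eq u v : Cau u -> Cau v -> D u v = 0 -> cls u = cls v.
Proof.
  intros Hu Hv H0. apply functional_extensionality. intro w.
  apply propositional_extensionality. unfold cls. split; intros [Hw Hd]; split; auto.
  - assert (T := D_tri v u w Hv Hu Hw). rewrite D_sym in H0.
    assert (0 <= D v w) by (apply D_nn; auto). lra.
  - assert (T := D_tri u v w Hu Hv Hw). assert (0 <= D u w) by (apply D_nn; auto). lra.
Qed.

Lemma Y_eq y y' : D (rep y) (rep y') = 0 -> y = y'.
Proof.
  intro H0. destruct (rep_spec y) as [C1 E1]. destruct (rep_spec y') as [C2 E2].
  assert (proj1_sig y = proj1_sig y') by (rewrite E1, E2; apply cls_eq; auto).
  destruct y as [S HS], y' as [S' HS']. simpl in *. subst S'. f_equal. apply proof_irrelevance.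
Qed.

Lemma rep_mk u H : D (rep (mk u H)) u = 0.
Proof.
  destruct (rep_spec (mk u H)) as [C E]. simpl in E.
  assert (cls u u) by (split; auto; apply D_refl).
  rewrite E in H0. destruct H0; auto.
Qed.

Lemma D_congr u u' v v' : Cau u -> Cau u' -> Cau v -> Cau v' -> D u u' = 0 -> D v v' = 0 -> D u v = D u' v'.
Proof.
  intros. assert (T1 := D_tri u' u v). assert (T2 := D_tri u' v v'). 
  assert (T3 := D_tri u u' v'). assert (T4 := D_tri u v' v).
  rewrite (D_sym u' u) in T1. rewrite (D_sym v' v) in T4.
  specialize (T1 H0 H H1). specialize (T2 H0 H1 H2). specialize (T3 H H0 H2). specialize (T4 H H2 H1).
  lra.
Qed.

Lemma dY_mk u v Hu Hv : dY (mk u Hu) (mk v Hv) = D u v.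
Proof.
  unfold dY. apply D_congr; auto using rep_cau; apply rep_mk.
Qed.

Lemma dY_metric : is_metric dY.
Proof.
  unfold dY. split; [|split; [|split]].
  - intros; apply D_nn; apply rep_cau.
  - intros x y; split; [apply Y_eq| intros ->; apply D_refl].
  - intros; apply D_sym.
  - intros; apply D_tri; apply rep_cau.
Qed.

Lemma dY_bounded M : (forall a b, p a b <= M) -> metric_bounded dY.
Proof. intro HM. exists M. intros. apply D_le; try apply rep_cau. exists 0%nat; auto. Qed.

Definition emb (b : B) : Y := mk (fun _ => b) (Cau_const b).

Lemma dY_emb a b : dY (emb a) (emb b) = p a b.
Proof. unfold emb. rewrite dY_mk. apply D_const. Qed.

Lemma emb_eq a b : p a b = 0 -> emb a = emb b.
Proof. intro H. apply Y_eq. fold (dY (emb a) (emb b)). rewrite dY_emb; auto. Qed.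

Lemma dY_rep_emb y b : dY y (emb b) = D (rep y) (fun _ => b).
Proof. unfold dY. apply D_congr; auto using rep_cau, Cau_const. apply D_refl. apply rep_mk. Qed.

Lemma dY_emb_mk a v Hv : dY (emb a) (mk v Hv) = D (fun _ => a) v.
Proof. unfold emb. apply dY_mk. Qed.

Lemma Cau_map f u : (forall a b, p (f a) (f b) = p a b) -> Cau u -> Cau (fun n => f (u n)).
Proof. intros hf Hu e He. destruct (Hu e He) as [N HN]. exists N. intros. rewrite hf. auto. Qed.

Definition ext (f : B -> B) (hf : forall a b, p (f a) (f b) = p a b) (y : Y) : Y :=
  mk (fun n => f (rep y n)) (Cau_map f _ hf (rep_cau y)).

Lemma D_map f u v : (forall a b, p (f a) (f b) = p a b) -> D (fun n => f (u n)) (fun n => f (v n)) = D u v.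
Proof. intro hf. unfold D. f_equal. apply functional_extensionality. intro; auto. Qed.

Lemma ext_iso f hf y y' : dY (ext f hf y) (ext f hf y') = dY y y'.
Proof. unfold ext. rewrite dY_mk. apply D_map; auto. Qed.

Lemma ext_comp f hf g hg h hh y : (forall b, h b = f (g b)) ->
   ext f hf (ext g hg y) = ext h hh y.
Proof.
  intro Hfg. apply Y_eq.
  rewrite D_congr with (u' := fun n => f (rep (ext g hg y) n)) (v' := fun n => h (rep y n));
    auto using rep_cau, Cau_map.
  - assert (E : (fun n => h (rep y n)) = (fun n => f (g (rep y n)))) by (apply functional_extensionality; auto).
    rewrite E. rewrite D_map; auto. unfold ext. apply rep_mk.
  - unfold ext at 1. apply rep_mk.
  - unfold ext. apply rep_mk.
Qed.

Lemma rep_mk' u v Hu : u = v -> D (rep (mk u Hu)) v = 0.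
Proof. intros; subst; apply rep_mk. Qed.

Lemma ext_id f hf y : (forall b, f b = b) -> ext f hf y = y.
Proof.
  intro Hf. apply Y_eq. unfold ext. apply rep_mk'.
  apply functional_extensionality; auto.
Qed.

Lemma ext_emb f hf b : ext f hf (emb b) = emb (f b).
Proof.
  apply Y_eq. unfold ext at 1.
  rewrite D_congr with (u' := fun n => f (rep (emb b) n)) (v' := fun _ => f b);
    auto using rep_cau, Cau_map, Cau_const.
  - change (fun _ : nat => f b) with (fun n : nat => f ((fun _ : nat => b) n)).
    rewrite D_map; auto. unfold emb. apply rep_mk.
  - apply rep_mk.
  - unfold emb. apply rep_mk.
Qed.

Lemma ext_close f hf g hg y c : (forall b, p (f b) (g b) <= c) -> dY (ext f hf y) (ext g hg y) <= c.
Proof. intro H. unfold ext. rewrite dY_mk. apply D_le; auto using Cau_map, rep_cau. exists 0%nat; auto. Qed.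


Lemma dY_tri x y z : dY x z <= dY x y + dY y z.
Proof. apply dY_metric. Qed.
Lemma dY_sym x y : dY x y = dY y x.
Proof. apply dY_metric. Qed.

Lemma dY_separable : metric_separable p -> metric_separable dY.
Proof.
  intros [s Hs].
  exists (fun n => match s n with Some b => Some (emb b) | None => None end).
  intros y e He.
  destruct (D_approx (rep y) (e/3) (rep_cau y) ltac:(lra)) as [N HN].
  destruct (HN N (le_n _)) as [_ Hp].
  destruct (Hs (rep y N) (e/3) ltac:(lra)) as [n [b [Hsn Hb]]].
  exists n, (emb b). split; [rewrite Hsn; auto|].
  rewrite dY_rep_emb. apply Rle_lt_trans with (2*e/3); [|lra].
  apply D_le; auto using rep_cau, Cau_const.
  exists N. intros k Hk. specialize (Hp k Hk). assert (T := p_tri (rep y k) (rep y N) b). lra.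
Qed.

Lemma inv_small n N : (0 < N)%nat -> (N <= n)%nat -> / (INR n + 1) <= / INR N.
Proof.
  intros. apply Rinv_le_contravar. apply lt_0_INR; auto.
  assert (INR N <= INR n) by (apply le_INR; auto). lra.
Qed.

Lemma dY_complete : metric_complete dY.
Proof.
  intros u Hu.
  assert (Hm : forall n, exists m, D (rep (u n)) (fun _ => rep (u n) m) <= / (INR n + 1)).
  { intro n. assert (0 < / (INR n + 1)) by (apply Rinv_0_lt_compat; assert (T:=pos_INR n); lra).
    destruct (D_approx (rep (u n)) _ (rep_cau _) H) as [N HN]. exists N. apply HN; auto. }
  set (mf := fun n => proj1_sig (constructive_indefinite_description _ (Hm n))).
  assert (Hmf : forall n, D (rep (u n)) (fun _ => rep (u n) (mf n)) <= / (INR n + 1)).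
  { intro n. unfold mf. destruct constructive_indefinite_description; auto. }
  set (b := fun n => rep (u n) (mf n)).
  assert (Hb : forall n, dY (u n) (emb (b n)) <= / (INR n + 1)).
  { intro n. rewrite dY_rep_emb. apply Hmf. }
  assert (Hcb : Cau b).
  { intros e He. destruct (archimed_cor1 (e/3) ltac:(lra)) as [N1 [HN1 HN1']].
    destruct (Hu (e/3) ltac:(lra)) as [N2 HN2].
    exists (N1 + N2)%nat. intros m n Hm' Hn'.
    rewrite <- dY_emb.
    assert (T1 := dY_tri (emb (b m)) (u m) (emb (b n))).
    assert (T2 := dY_tri (u m) (u n) (emb (b n))).
    rewrite (dY_sym (emb (b m)) (u m)) in T1.
    assert (A1 := Hb m). assert (A2 := Hb n).
    assert (B1 := inv_small m N1 HN1' ltac:(lia)). assert (B2 := inv_small n N1 HN1' ltac:(lia)).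
    idtac.
    assert (C := HN2 m n ltac:(lia) ltac:(lia)). lra. }
  exists (mk b Hcb). intros e He.
  destruct (archimed_cor1 (e/2) ltac:(lra)) as [N1 [HN1 HN1']].
  destruct (Hcb (e/2) ltac:(lra)) as [N2 HN2].
  exists (N1 + N2)%nat. intros n Hn.
  assert (T := dY_tri (u n) (emb (b n)) (mk b Hcb)).
  rewrite dY_emb_mk in T.
  assert (Dl : D (fun _ => b n) b <= e/2).
  { apply D_le; auto using Cau_const. exists N2. intros k Hk. left. apply HN2; lia. }
  assert (A1 := Hb n). assert (B1 := inv_small n N1 HN1' ltac:(lia)). lra.
Qed.

End Completion.

Definition supR (E : R -> Prop) : R :=
  match excluded_middle_informative (bound E /\ exists x, E x) with
  | left H => proj1_sig (completeness E (proj1 H) (proj2 H))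
  | right _ => 0 end.

Lemma supR_spec E : bound E -> (exists x, E x) -> is_lub E (supR E).
Proof.
  intros H1 H2. unfold supR. destruct excluded_middle_informative as [H|H].
  - destruct completeness; auto.
  - tauto.
Qed.

Section Inf.
Variable K : Type.
Variable Gamma : K -> Prop.
Variable one : K.
Hypothesis Hone : Gamma one.

Definition infG (F : K -> R) : R := - supR (fun y => exists g, Gamma g /\ y = - F g).

Lemma infG_lub F : (forall g, Gamma g -> 0 <= F g) ->
  is_lub (fun y => exists g, Gamma g /\ y = - F g) (supR (fun y => exists g, Gamma g /\ y = - F g)).
Proof.
  intro Hnn. apply supR_spec.
  - exists 0. intros y [g [Hg ->]]. specialize (Hnn g Hg). lra.
  - exists (- F one). eauto.
Qed.

Lemma infG_le F g : (forall g, Gamma g -> 0 <= F g) -> Gamma g -> infG F <= F g.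
Proof.
  intros Hnn Hg. destruct (infG_lub F Hnn) as [Hub _]. unfold infG.
  assert (T := Hub (- F g) (ex_intro _ g (conj Hg eq_refl))). lra.
Qed.

Lemma infG_ge F c : (forall g, Gamma g -> 0 <= F g) -> (forall g, Gamma g -> c <= F g) -> c <= infG F.
Proof.
  intros Hnn Hc. destruct (infG_lub F Hnn) as [_ Hl]. unfold infG.
  assert (T : supR (fun y => exists g, Gamma g /\ y = - F g) <= - c).
  { apply Hl. intros y [g [Hg ->]]. specialize (Hc g Hg). lra. }
  lra.
Qed.

Lemma infG_approx F e : (forall g, Gamma g -> 0 <= F g) -> 0 < e -> exists g, Gamma g /\ F g < infG F + e.
Proof.
  intros Hnn He. destruct (classic (exists g, Gamma g /\ F g < infG F + e)) as [H|H]; auto.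
  exfalso. assert (infG F + e <= infG F); [|lra].
  apply infG_ge; auto. intros g Hg. destruct (Rle_or_lt (infG F + e) (F g)); auto.
  exfalso; eauto.
Qed.

Lemma infG_nn F : (forall g, Gamma g -> 0 <= F g) -> 0 <= infG F.
Proof. intros; apply infG_ge; auto. Qed.
End Inf.

Section Main.
Variable K : Type.
Variable G : group_str K.
Variable dK : K -> K -> R.
Hypothesis HdK : is_metric dK.
Hypothesis Hbi : bi_invariant G dK.
Variable Gamma : K -> Prop.
Hypothesis HGsub : is_subgroup G Gamma.
Variable eps0 : R.
Hypothesis Heps0 : 0 < eps0.
Hypothesis Hdisc0 : forall h, Gamma h -> dK (gone G) h < eps0 -> h = gone G.
Variable Z : Type.
Variable dZ : Z -> Z -> R.
Hypothesis HdZ : is_metric dZ.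
Variable Mz : R.
Hypothesis HMz : 0 < Mz.
Hypothesis HMzb : forall z z', dZ z z' <= Mz.
Variable actZ : K -> Z -> Z.
Hypothesis HactZ : is_action_on G Gamma actZ.
Hypothesis HisoZ : action_isometric_on Gamma dZ actZ.

Notation mul := (gmul G).
Notation one := (gone G).
Notation inv := (ginv G).

Lemma dK_nn x y : 0 <= dK x y. Proof. apply HdK. Qed.
Lemma dK_refl x : dK x x = 0. Proof. apply HdK; auto. Qed.
Lemma dK_sym x y : dK x y = dK y x. Proof. apply HdK. Qed.
Lemma dK_tri x y z : dK x z <= dK x y + dK y z. Proof. apply HdK. Qed.
Lemma dK_l g x y : dK (mul g x) (mul g y) = dK x y. Proof. apply Hbi. Qed.
Lemma dK_r g x y : dK (mul x g) (mul y g) = dK x y. Proof. apply Hbi. Qed.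
Lemma dZ_nn x y : 0 <= dZ x y. Proof. apply HdZ. Qed.
Lemma dZ_refl x : dZ x x = 0. Proof. apply HdZ; auto. Qed.
Lemma dZ_sym x y : dZ x y = dZ y x. Proof. apply HdZ. Qed.
Lemma dZ_tri x y z : dZ x z <= dZ x y + dZ y z. Proof. apply HdZ. Qed.

Definition dZ' (a b : option Z) : R :=
  match a, b with
  | Some x, Some y => dZ x y
  | None, None => 0
  | _, _ => Mz end.

Definition act' (g : K) (a : option Z) : option Z := option_map (actZ g) a.

Lemma dZ'_nn a b : 0 <= dZ' a b.
Proof. destruct a, b; simpl; auto using dZ_nn; lra. Qed.
Lemma dZ'_refl a : dZ' a a = 0.
Proof. destruct a; simpl; auto using dZ_refl. Qed.
Lemma dZ'_sym a b : dZ' a b = dZ' b a.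
Proof. destruct a, b; simpl; auto using dZ_sym. Qed.
Lemma dZ'_tri a b c : dZ' a c <= dZ' a b + dZ' b c.
Proof.
  destruct a as [a|], b as [b|], c as [c|]; simpl; auto using dZ_tri;
  try (pose proof (dZ_nn a b)); try (pose proof (dZ_nn b c)); try (pose proof (HMzb a c)); lra.
Qed.
Lemma dZ'_le a b : dZ' a b <= Mz.
Proof. destruct a, b; simpl; auto; lra. Qed.
Lemma act'_iso g a b : Gamma g -> dZ' (act' g a) (act' g b) = dZ' a b.
Proof. intro Hg. destruct a, b; simpl; auto. Qed.
Lemma act'_one a : act' one a = a.
Proof. destruct a; simpl; auto. f_equal. apply HactZ. Qed.
Lemma act'_mul g h a : Gamma g -> Gamma h -> act' (mul g h) a = act' g (act' h a).
Proof. intros. destruct a; simpl; auto. f_equal. apply HactZ; auto. Qed.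

Definition rho (x y : K) : R := Mz / eps0 * Rmin (dK x y) eps0.

Lemma c_pos : 0 < Mz / eps0.
Proof. apply Rdiv_lt_0_compat; auto. Qed.

Lemma rmin_nn a : 0 <= a -> 0 <= Rmin a eps0.
Proof. intro. unfold Rmin; destruct Rle_dec; lra. Qed.

Lemma rho_nn x y : 0 <= rho x y.
Proof. unfold rho. apply Rmult_le_pos. left; apply c_pos. apply rmin_nn, dK_nn. Qed.
Lemma rho_refl x : rho x x = 0.
Proof. unfold rho. rewrite dK_refl. unfold Rmin. destruct Rle_dec; lra. Qed.
Lemma rho_sym x y : rho x y = rho y x.
Proof. unfold rho. rewrite dK_sym; auto. Qed.
Lemma rho_tri x y z : rho x z <= rho x y + rho y z.
Proof.
  unfold rho. rewrite <- Rmult_plus_distr_l. apply Rmult_le_compat_l. left; apply c_pos.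
  assert (T := dK_tri x y z). assert (T1 := dK_nn x y). assert (T2 := dK_nn y z).
  unfold Rmin; repeat destruct Rle_dec; lra.
Qed.
Lemma rho_le x y : rho x y <= Mz.
Proof.
  unfold rho. assert (Rmin (dK x y) eps0 <= eps0) by apply Rmin_r.
  assert (T := c_pos).
  apply Rle_trans with (Mz / eps0 * eps0). apply Rmult_le_compat_l; lra.
  right. field. lra.
Qed.
Lemma rho_far x y : eps0 <= dK x y -> rho x y = Mz.
Proof.
  intro H. unfold rho. unfold Rmin. destruct Rle_dec; [|field; lra].
  replace (dK x y) with eps0 by lra. field. lra.
Qed.
Lemma rho_lip x y : rho x y <= Mz / eps0 * dK x y.
Proof.
  unfold rho. apply Rmult_le_compat_l. left; apply c_pos. apply Rmin_l.
Qed.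
Lemma rho_small x y : rho x y < Mz / 2 -> dK x y < eps0 / 2.
Proof.
  unfold rho. intro H. unfold Rmin in H. destruct Rle_dec.
  - apply Rmult_lt_reg_l with (Mz / eps0). apply c_pos.
    replace (Mz / eps0 * (eps0 / 2)) with (Mz / 2) by (field; lra). auto.
  - exfalso. replace (Mz / eps0 * eps0) with Mz in H by (field; lra). lra.
Qed.
Lemma rho_zero x y : rho x y = 0 -> x = y.
Proof.
  unfold rho. intro H. apply Rmult_integral in H. destruct H as [H|H].
  - assert (T := c_pos). lra.
  - unfold Rmin in H. destruct Rle_dec; [|lra]. apply HdK; auto.
Qed.
Lemma rho_l g x y : rho (mul g x) (mul g y) = rho x y.
Proof. unfold rho. rewrite dK_l; auto. Qed.
Lemma rho_r g x y : rho (mul x g) (mul y g) = rho x y.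
Proof. unfold rho. rewrite dK_r; auto. Qed.

Lemma G_one : Gamma one. Proof. apply HGsub. Qed.
Lemma G_mul x y : Gamma x -> Gamma y -> Gamma (mul x y). Proof. apply HGsub. Qed.
Lemma G_inv x : Gamma x -> Gamma (inv x). Proof. apply HGsub. Qed.

Definition B := (K * option Z)%type.

Definition term (x x' : B) (g : K) : R :=
  Rmax (rho (mul (fst x) g) (fst x')) (dZ' (snd x) (act' g (snd x'))).

Lemma term_nn x x' g : 0 <= term x x' g.
Proof. unfold term. apply Rle_trans with (2 := Rmax_l _ _). apply rho_nn. Qed.

Definition pB (x x' : B) : R := infG K Gamma (term x x').

Lemma pB_le x x' g : Gamma g -> pB x x' <= term x x' g.
Proof. intro. apply (infG_le K Gamma one G_one); auto. intros; apply term_nn. Qed.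
Lemma pB_ge x x' c : (forall g, Gamma g -> c <= term x x' g) -> c <= pB x x'.
Proof. intro. apply (infG_ge K Gamma one G_one); auto. intros; apply term_nn. Qed.
Lemma pB_approx x x' e : 0 < e -> exists g, Gamma g /\ term x x' g < pB x x' + e.
Proof. intro. apply (infG_approx K Gamma one G_one); auto. intros; apply term_nn. Qed.

Lemma pB_nn x y : 0 <= pB x y.
Proof. apply pB_ge. intros; apply term_nn. Qed.

Lemma term_one x x' : term x x' one = Rmax (rho (fst x) (fst x')) (dZ' (snd x) (snd x')).
Proof. unfold term. rewrite (gmul1r _ G), act'_one. auto. Qed.

Lemma rmax_le a b c : a <= c -> b <= c -> Rmax a b <= c.
Proof. intros; unfold Rmax; destruct Rle_dec; auto. Qed.

Lemma pB_le_one x x' : pB x x' <= Rmax (rho (fst x) (fst x')) (dZ' (snd x) (snd x')).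
Proof. rewrite <- term_one. apply pB_le, G_one. Qed.

Lemma pB_refl x : pB x x = 0.
Proof.
  apply Rle_antisym; [|apply pB_nn]. eapply Rle_trans; [apply pB_le_one|].
  rewrite rho_refl, dZ'_refl. unfold Rmax; destruct Rle_dec; lra.
Qed.

Lemma pB_bound x y : pB x y <= Mz.
Proof. eapply Rle_trans; [apply pB_le_one|]. apply rmax_le; auto using rho_le, dZ'_le. Qed.

Lemma term_sym x x' g : Gamma g -> term x' x (inv g) = term x x' g.
Proof.
  intro Hg. unfold term. f_equal.
  - rewrite <- (rho_r g). rewrite <- (gmulA _ G), (gmulVl _ G), (gmul1r _ G). apply rho_sym.
  - rewrite <- (act'_iso g) by auto. rewrite <- act'_mul by auto using G_inv.
    rewrite (gmulVr _ G), act'_one. apply dZ'_sym.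
Qed.

Lemma pB_sym_le x x' : pB x' x <= pB x x'.
Proof.
  apply pB_ge. intros g Hg. rewrite <- term_sym by auto. apply pB_le, G_inv; auto.
Qed.

Lemma pB_sym x x' : pB x x' = pB x' x.
Proof. apply Rle_antisym; apply pB_sym_le. Qed.

Lemma term_tri x y z g h : Gamma g -> Gamma h ->
  term x z (mul g h) <= term x y g + term y z h.
Proof.
  intros Hg Hh. unfold term. apply rmax_le.
  - eapply Rle_trans; [apply (rho_tri _ (mul (fst y) h))|].
    rewrite (gmulA _ G), rho_r.
    apply Rplus_le_compat; apply Rmax_l.
  - rewrite act'_mul by auto.
    eapply Rle_trans; [apply (dZ'_tri _ (act' g (snd y)))|].
    rewrite act'_iso by auto. apply Rplus_le_compat; apply Rmax_r.
Qed.

Lemma pB_tri x y z : pB x z <= pB x y + pB y z.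
Proof.
  apply le_epsilon. intros e He.
  destruct (pB_approx x y (e/2)) as [g [Hg T1]]; [lra|].
  destruct (pB_approx y z (e/2)) as [h [Hh T2]]; [lra|].
  assert (T := term_tri x y z g h Hg Hh).
  assert (T3 := pB_le x z (mul g h) (G_mul _ _ Hg Hh)). lra.
Qed.

Definition actB (g : K) (x : B) : B := (mul g (fst x), snd x).

Lemma actB_iso g x y : pB (actB g x) (actB g y) = pB x y.
Proof.
  unfold pB. f_equal. apply functional_extensionality. intro h. unfold term, actB; simpl.
  rewrite <- (gmulA _ G), rho_l. auto.
Qed.

Definition Yt := Y B pB.
Definition dYt := dY B pB.
Definition actY (g : K) (y : Yt) : Yt := ext B pB (actB g) (actB_iso g) y.
Definition embB (b : B) : Yt := emb B pB pB_refl b.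
Definition e (z : Z) : Yt := embB (one, Some z).

Lemma Y_metric : is_metric dYt.
Proof. apply dY_metric; auto using pB_nn, pB_refl, pB_sym, pB_tri. Qed.

Lemma Y_bounded : metric_bounded dYt.
Proof. apply (dY_bounded B pB pB_sym pB_tri Mz). apply pB_bound. Qed.

Lemma Y_complete : metric_complete dYt.
Proof. apply dY_complete; auto using pB_nn, pB_refl, pB_sym, pB_tri. Qed.

Hypothesis HsepK : metric_separable dK.
Hypothesis HsepZ : metric_separable dZ.
Hypothesis HfaithZ : action_faithful_on G Gamma actZ.

Lemma Z'_sep : exists s : nat -> option (option Z), forall a eps, 0 < eps -> exists n y, s n = Some y /\ dZ' a y < eps.
Proof.
  destruct HsepZ as [s Hs].
  exists (fun n => match n with O => Some None | S n => option_map Some (s n) end).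
  intros a eps Heps. destruct a as [z|].
  - destruct (Hs z eps Heps) as [n [y [Hn Hy]]]. exists (S n), (Some y). rewrite Hn; simpl; auto.
  - exists O, None. simpl. auto.
Qed.

Lemma B_sep : metric_separable pB.
Proof.
  destruct HsepK as [sK HsK]. destruct Z'_sep as [sZ HsZ].
  exists (fun n => let (i, j) := Cantor.of_nat n in
     match sK i, sZ j with Some k, Some z => Some (k, z) | _, _ => None end).
  intros [k z] eps Heps.
  assert (T := c_pos).
  destruct (HsK k (eps / (Mz / eps0))) as [i [k' [Hi Hk]]]. apply Rdiv_lt_0_compat; auto.
  destruct (HsZ z eps Heps) as [j [z' [Hj Hz]]].
  exists (Cantor.to_nat (i, j)), (k', z'). rewrite Cantor.cancel_of_to, Hi, Hj. split; auto.
  eapply Rle_lt_trans; [apply pB_le_one|]. simpl.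
  unfold Rmax; destruct Rle_dec; auto.
  eapply Rle_lt_trans; [apply rho_lip|].
  apply Rmult_lt_reg_l with (/ (Mz / eps0)). apply Rinv_0_lt_compat; auto.
  rewrite <- Rmult_assoc, Rinv_l by lra. rewrite Rmult_1_l. 
  replace (/ (Mz / eps0) * eps) with (eps / (Mz / eps0)) by (unfold Rdiv; ring). auto.
Qed.

Lemma Y_sep : metric_separable dYt.
Proof. apply dY_separable; try exact pB_nn; try exact pB_refl; try exact pB_sym; try exact pB_tri; exact B_sep. Qed.

Lemma actY_one y : actY one y = y.
Proof. apply ext_id; try exact pB_nn; try exact pB_refl; try exact pB_sym; try exact pB_tri. intros [k z]. unfold actB; simpl. rewrite (gmul1l _ G). auto. Qed.

Lemma actY_mul g h y : actY (mul g h) y = actY g (actY h y).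
Proof.
  symmetry. apply ext_comp; try exact pB_nn; try exact pB_refl; try exact pB_sym; try exact pB_tri. intros [k z]. unfold actB; simpl.
  rewrite (gmulA _ G). auto.
Qed.

Lemma actY_iso g y y' : dYt (actY g y) (actY g y') = dYt y y'.
Proof. apply ext_iso; try exact pB_nn; try exact pB_refl; try exact pB_sym; try exact pB_tri. Qed.

Lemma actY_emb g b : actY g (embB b) = embB (actB g b).
Proof. apply ext_emb; try exact pB_nn; try exact pB_refl; try exact pB_sym; try exact pB_tri. Qed.

Lemma dYt_emb a b : dYt (embB a) (embB b) = pB a b.
Proof. apply dY_emb; try exact pB_nn; try exact pB_refl; try exact pB_sym; try exact pB_tri. Qed.

Lemma actY_close g g' y : dYt (actY g y) (actY g' y) <= Mz / eps0 * dK g g'.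
Proof.
  apply ext_close; try exact pB_nn; try exact pB_refl; try exact pB_sym; try exact pB_tri.
  intros [k z]. eapply Rle_trans; [apply pB_le_one|]. unfold actB; simpl.
  rewrite dZ'_refl, rho_r. apply rmax_le; [apply rho_lip|].
  apply Rmult_le_pos; [left; apply c_pos| apply dK_nn].
Qed.

Lemma Y_cont : action_continuous dK dYt actY.
Proof.
  intros g y eps Heps. assert (T := c_pos).
  exists (eps / (2 * (Mz / eps0 + 1))). split.
  { apply Rdiv_lt_0_compat; lra. }
  intros g' y' H1 H2.
  assert (Tr : dYt (actY g y) (actY g' y') <= dYt (actY g y) (actY g' y) + dYt (actY g' y) (actY g' y'))
    by apply Y_metric.
  rewrite actY_iso in Tr. assert (C := actY_close g g' y).
  set (d := eps / (2 * (Mz / eps0 + 1))) in *.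
  assert (Hd : (Mz / eps0 + 1) * d = eps / 2) by (unfold d; field; lra).
  assert (Mz / eps0 * dK g g' <= Mz / eps0 * d) by (apply Rmult_le_compat_l; lra).
  nra.
Qed.

Lemma e_iso z z' : dYt (e z) (e z') = dZ z z'.
Proof.
  unfold e. rewrite dYt_emb. apply Rle_antisym.
  - eapply Rle_trans; [apply pB_le_one|]. simpl. rewrite rho_refl.
    apply rmax_le; auto using dZ_nn. right; auto.
  - apply pB_ge. intros g Hg. unfold term; simpl. rewrite (gmul1l _ G).
    destruct (classic (g = one)) as [->|Hne].
    + rewrite (proj1 HactZ). apply Rmax_r.
    + assert (eps0 <= dK g one).
      { destruct (Rle_or_lt eps0 (dK g one)); auto. exfalso. apply Hne. apply Hdisc0; auto.
        rewrite dK_sym; auto. }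
      rewrite rho_far by auto. eapply Rle_trans; [|apply Rmax_l]. auto.
Qed.

Lemma e_equiv g z : Gamma g -> e (actZ g z) = actY g (e z).
Proof.
  intro Hg. unfold e. rewrite actY_emb. apply emb_eq; try exact pB_nn; try exact pB_refl; try exact pB_sym; try exact pB_tri.
  apply Rle_antisym; [|apply pB_nn].
  eapply Rle_trans; [apply (pB_le _ _ g Hg)|]. unfold term, actB; simpl.
  rewrite (gmul1l _ G), (gmul1r _ G), rho_refl, dZ_refl. unfold Rmax; destruct Rle_dec; lra.
Qed.

Lemma small_zero x c : 0 <= x -> 0 < c -> (forall d, 0 < d -> d <= c -> x < d) -> x = 0.
Proof.
  intros H0 Hc H. destruct (Rle_lt_or_eq_dec 0 x H0) as [Hp|]; auto.
  exfalso. specialize (H (Rmin x c)). assert (Rmin x c <= x) by apply Rmin_l.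
  assert (Rmin x c <= c) by apply Rmin_r.
  assert (0 < Rmin x c) by (unfold Rmin; destruct Rle_dec; lra). specialize (H H3 H2). lra.
Qed.

Lemma uniq g g1 g2 : Gamma g1 -> Gamma g2 -> rho (mul g g1) one < Mz / 2 -> rho (mul g g2) one < Mz / 2 -> g1 = g2.
Proof.
  intros H1 H2 R1 R2. apply rho_small in R1. apply rho_small in R2.
  assert (dK g1 g2 < eps0).
  { rewrite <- (dK_l g). assert (T := dK_tri (mul g g1) one (mul g g2)). rewrite (dK_sym one) in T. lra. }
  assert (E : mul (inv g2) g1 = one).
  { apply Hdisc0. apply G_mul; auto using G_inv.
    rewrite <- (gmulVl _ G g2). rewrite dK_l. rewrite dK_sym. auto. }
  assert (mul g2 (mul (inv g2) g1) = g1) by (rewrite (gmulA _ G), (gmulVr _ G), (gmul1l _ G); auto).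
  rewrite E, (gmul1r _ G) in H0. auto.
Qed.

Lemma Y_faithful : action_faithful_on G whole actY.
Proof.
  intros g _ Hg.
  assert (P0 : forall w, pB (g, w) (one, w) = 0).
  { intro w. assert (T := Hg (embB (one, w))). rewrite actY_emb in T. unfold actB in T; simpl in T.
    rewrite (gmul1r _ G) in T. rewrite <- dYt_emb, T. apply Y_metric; auto. }
  destruct (pB_approx (g, None) (one, None) (Mz / 2)) as [g0 [Hg0 T0]]; [lra|].
  rewrite P0 in T0. unfold term in T0; cbn [fst snd] in T0.
  assert (R0 : rho (mul g g0) one < Mz / 2) by (pose proof (Rmax_l (rho (mul g g0) one) (dZ' None (act' g0 None))); lra).
  assert (Key : forall w d, 0 < d -> d <= Mz / 2 -> rho (mul g g0) one < d /\ dZ' w (act' g0 w) < d).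
  { intros w d Hd Hd2. destruct (pB_approx (g, w) (one, w) d Hd) as [g1 [Hg1 T1]].
    rewrite P0 in T1. unfold term in T1; cbn [fst snd] in T1.
    assert (R1 : rho (mul g g1) one < d) by (pose proof (Rmax_l (rho (mul g g1) one) (dZ' w (act' g1 w))); lra).
    assert (g1 = g0) by (apply (uniq g); auto; lra). subst g1.
    split; auto. pose proof (Rmax_r (rho (mul g g0) one) (dZ' w (act' g0 w))); lra. }
  assert (E1 : mul g g0 = one).
  { apply rho_zero. apply (small_zero _ (Mz/2)); auto using rho_nn; [lra|].
    intros d Hd Hd2. apply (Key None d Hd Hd2). }
  assert (E2 : g0 = one).
  { apply HfaithZ; auto. intro z. symmetry. apply HdZ.
    apply (small_zero _ (Mz/2)); auto using dZ_nn; [lra|].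
    intros d Hd Hd2. apply (Key (Some z) d Hd Hd2). }
  rewrite E2, (gmul1r _ G) in E1. auto.
Qed.

End Main.

Theorem lemma6p1
  (K : Type) (G : group_str K) (dK : K -> K -> R)
  (HK : polish_group_biinv_metric G dK)
  (Gamma : K -> Prop) (HGsub : is_subgroup G Gamma) (HGdisc : discrete_subset dK Gamma)
  (Z : Type) (dZ : Z -> Z -> R) (HZ : polish_metric_space dZ) (HZb : metric_bounded dZ)
  (actZ : K -> Z -> Z)
  (HactZ : is_action_on G Gamma actZ)
  (HfaithZ : action_faithful_on G Gamma actZ)
  (HisoZ : action_isometric_on Gamma dZ actZ) :
  exists (Y : Type) (dY : Y -> Y -> R) (actY : K -> Y -> Y) (e : Z -> Y),
    polish_metric_space dY /\ metric_bounded dY /\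
    is_action_on G whole actY /\
    action_continuous dK dY actY /\
    action_faithful_on G whole actY /\
    action_isometric_on whole dY actY /\
    (forall z z', dY (e z) (e z') = dZ z z') /\
    (forall g z, Gamma g -> e (actZ g z) = actY g (e z)).
Proof.
  destruct HK as [HdK [_ [[HsepK _] Hbi]]].
  destruct (HGdisc (gone G) (proj1 HGsub)) as [eps0 [Heps0 Hdisc0]].
  destruct HZ as [HdZ [HsepZ _]].
  assert (HM : exists Mz, 0 < Mz /\ forall z z', dZ z z' <= Mz).
  { destruct HZb as [M HM]. exists (Rabs M + 1). split.
    - pose proof (Rabs_pos M); lra.
    - intros z z'. pose proof (HM z z'); pose proof (Rle_abs M); lra. }
  destruct HM as [Mz [HMz HMzb]].
  exists (Yt K G dK Gamma eps0 Z dZ Mz actZ), (dYt K G dK Gamma eps0 Z dZ Mz actZ),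
    (actY K G dK Hbi Gamma eps0 Z dZ Mz actZ),
    (e K G dK HdK Gamma HGsub eps0 Heps0 Z dZ HdZ Mz HMz actZ HactZ).
  split; [split; [|split]|split; [|split; [|split; [|split; [|split; [|split]]]]]].
  - eapply Y_metric; eauto.
  - eapply Y_sep; eauto.
  - eapply Y_complete; eauto.
  - eapply Y_bounded; eauto.
  - split.
    + intro y. eapply actY_one; eauto.
    + intros g h y _ _. eapply actY_mul; eauto.
  - eapply Y_cont; eauto.
  - eapply Y_faithful; eauto.
  - intros g y y' _. eapply actY_iso; eauto.
  - intros z z'. eapply e_iso; eauto.
  - intros g z Hg. eapply e_equiv; eauto.
Qed.
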